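(* Let $n\ge 2$ and let $S=[A_0,\dots,A_n]$ be a regular $n$-simplex lying in $\mathbb{R}^m$ for some $m\ge n+1$, with edge length $u$ and circumradius $R$. Let $Q_0$ be the reflection of $A_0$ in the affine hull $H_0$ of the facet $[A_1,\dots,A_n]$, and let $\Omega$ be the set of all points $Q\in\mathbb{R}^m$ for which the $n$-simplex $[Q,A_1,\dots,A_n]$ is regular. Then $$\{\|Q-A_0\|:Q\in\Omega\}=\Big[0,\sqrt{\tfrac{2(n+1)}{n}}\,u\Big]=\Big[0,\tfrac{2(n+1)}{n}R\Big],$$ with the extreme values attained at $Q=A_0$ and $Q=Q_0$.
   Context: An $n$-simplex is the convex hull of $n+1$ affinely independent points; it is regular if all its edges have the same length. Its circumradius is the radius of the $(n-1)$-sphere (in its affine hull) through all its vertices. *)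

(* Defs.v *)
From HB Require Import structures.
From mathcomp Require Import all_boot all_order all_algebra.
From mathcomp Require Import reals.
Set Implicit Arguments. Unset Strict Implicit. Unset Printing Implicit Defensive.
Import Order.TTheory GRing.Theory Num.Theory.
Local Open Scope ring_scope.

Section Defs.
Variables (R : realType) (m : nat).
Notation vec := 'rV[R]_m.

Definition dotv (x y : vec) : R := \sum_(k < m) x ord0 k * y ord0 k.
Definition edist (x y : vec) : R := Num.sqrt (dotv (x - y) (x - y)).

Definition aff_indep (n : nat) (A : 'I_n.+1 -> vec) : Prop :=
  row_free (\matrix_(i < n) (A (lift ord0 i) - A ord0)).

Definition in_aff_hull (k : nat) (B : 'I_k -> vec) (c : vec) : Prop :=
  exists w : 'I_k -> R, \sum_(i < k) w i = 1 /\ c = \sum_(i < k) w i *: B i.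

Definition regular_simplex_edge (n : nat) (A : 'I_n.+1 -> vec) (u : R) : Prop :=
  aff_indep A /\ forall i j : 'I_n.+1, i != j -> edist (A i) (A j) = u.

Definition regular_simplex (n : nat) (A : 'I_n.+1 -> vec) : Prop :=
  exists u, regular_simplex_edge A u.

Definition is_circumradius (n : nat) (A : 'I_n.+1 -> vec) (r : R) : Prop :=
  exists c, in_aff_hull A c /\ forall i, edist c (A i) = r.

Definition facet0 (n : nat) (A : 'I_n.+1 -> vec) : 'I_n -> vec :=
  fun i => A (lift ord0 i).

Definition replace0 (n : nat) (A : 'I_n.+1 -> vec) (Q : vec) : 'I_n.+1 -> vec :=
  fun i => if i == ord0 then Q else A i.

(* Q0 is the reflection of x in the affine hull of B: Q0 = 2P - x where P is the
   orthogonal projection of x onto aff(B) *)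
Definition is_reflection_in_hull (k : nat) (B : 'I_k -> vec) (x Q0 : vec) : Prop :=
  exists P, in_aff_hull B P /\
    (forall i j, dotv (x - P) (B i - B j) = 0) /\ Q0 = 2%:R *: P - x.

End Defs.

(* Main.v *)
Require Import Defs.
From HB Require Import structures.
From mathcomp Require Import all_boot all_order all_algebra.
From mathcomp Require Import reals.
From mathcomp Require Import ring lra.
Import Order.TTheory GRing.Theory Num.Theory.
Local Open Scope ring_scope.
Set Implicit Arguments. Unset Strict Implicit. Unset Printing Implicit Defensive.

Section Dot.
Variables (R : realType) (m : nat).
Notation vec := 'rV[R]_m.
Implicit Types x y z : vec.

Lemma dotvC x y : dotv x y = dotv y x.
Proof. by apply: eq_bigr => k _; rewrite mulrC. Qed.

Lemma dotvDl x y z : dotv (x + y) z = dotv x z + dotv y z.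
Proof. by rewrite /dotv -big_split; apply: eq_bigr => k _; rewrite mxE mulrDl. Qed.

Lemma dotvZl a x y : dotv (a *: x) y = a * dotv x y.
Proof. by rewrite /dotv mulr_sumr; apply: eq_bigr => k _; rewrite mxE mulrA. Qed.

Lemma dotvNl x y : dotv (- x) y = - dotv x y.
Proof. by rewrite -scaleN1r dotvZl mulN1r. Qed.

Lemma dotvBl x y z : dotv (x - y) z = dotv x z - dotv y z.
Proof. by rewrite dotvDl dotvNl. Qed.

Lemma dotvDr x y z : dotv x (y + z) = dotv x y + dotv x z.
Proof. by rewrite dotvC dotvDl !(dotvC x). Qed.
Lemma dotvZr a x y : dotv x (a *: y) = a * dotv x y.
Proof. by rewrite dotvC dotvZl dotvC. Qed.
Lemma dotvNr x y : dotv x (- y) = - dotv x y.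
Proof. by rewrite dotvC dotvNl dotvC. Qed.
Lemma dotvBr x y z : dotv x (y - z) = dotv x y - dotv x z.
Proof. by rewrite dotvDr dotvNr. Qed.

Lemma dotv0l x : dotv 0 x = 0.
Proof. by rewrite -(scale0r 0) dotvZl mul0r. Qed.

Lemma dotv_suml (I : finType) (F : I -> vec) y :
  dotv (\sum_i F i) y = \sum_i dotv (F i) y.
Proof.
rewrite /dotv; under eq_bigr => k _ do rewrite summxE mulr_suml.
by rewrite exchange_big.
Qed.

Lemma dotv_sumr (I : finType) (F : I -> vec) y :
  dotv y (\sum_i F i) = \sum_i dotv y (F i).
Proof. by rewrite dotvC dotv_suml; apply: eq_bigr => i _; rewrite dotvC. Qed.

Lemma dotv_ge0 x : 0 <= dotv x x.
Proof. by apply: sumr_ge0 => k _; rewrite -expr2 sqr_ge0. Qed.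

Lemma dotv_eq0 x : dotv x x = 0 -> x = 0.
Proof.
move=> H; apply/rowP => k; rewrite mxE.
have := psumr_eq0P (P := predT) (fun k _ => sqr_ge0 (x ord0 k)).
rewrite /dotv in H; under eq_bigr do rewrite expr2. move=> /(_ H k isT) /eqP.
by rewrite sqrf_eq0 => /eqP.
Qed.

Lemma edist_sq x y u : edist x y = u -> dotv (x - y) (x - y) = u ^+ 2.
Proof. by move=> <-; rewrite /edist sqr_sqrtr // dotv_ge0. Qed.

Lemma edist_ge0 x y : 0 <= edist x y.
Proof. exact: sqrtr_ge0. Qed.

Lemma edistC x y : edist x y = edist y x.
Proof. by rewrite /edist -opprB dotvNl dotvNr opprK. Qed.

Lemma sqrt_sq_ge0 (a : R) : 0 <= a -> Num.sqrt (a ^+ 2) = a.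
Proof. by move=> ha; rewrite sqrtr_sqr ger0_norm. Qed.


Lemma dotv_sqB x y : dotv (x - y) (x - y) = dotv x x - 2 * dotv x y + dotv y y.
Proof. rewrite dotvBl !dotvBr (dotvC y x); lra. Qed.

Lemma dotv_sqD x y : dotv (x + y) (x + y) = dotv x x + 2 * dotv x y + dotv y y.
Proof. rewrite dotvDl !dotvDr (dotvC y x); lra. Qed.

Lemma sub_sub_common x y z : (x - z) - (y - z) = x - y.
Proof. by rewrite opprB addrA subrK. Qed.

Lemma gram_of_dists (n : nat) (B : 'I_n.+1 -> vec) u :
  (forall i j, i != j -> edist (B i) (B j) = u) ->
  forall i j : 'I_n, dotv (B (lift ord0 i) - B ord0) (B (lift ord0 j) - B ord0)
    = u ^+ 2 / 2 + (i == j)%:R * (u ^+ 2 / 2).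
Proof.
move=> H i j.
have Hs : forall k : 'I_n, dotv (B (lift ord0 k) - B ord0) (B (lift ord0 k) - B ord0) = u ^+ 2.
  move=> k; apply: edist_sq; rewrite edistC; apply: H; exact: neq_lift.
case: (eqVneq i j) => [<-|nij].
  by rewrite Hs /= mul1r; lra.
have hne : lift ord0 i != lift ord0 j by rewrite (inj_eq (@lift_inj _ ord0)).
have h := edist_sq (H _ _ hne).
rewrite -(sub_sub_common _ _ (B ord0)) in h.
have ha := Hs i; have hb := Hs j.
move: h ha hb; set a := B (lift ord0 i) - B ord0; set b := B (lift ord0 j) - B ord0.
move=> h ha hb.
rewrite dotv_sqB ha hb in h.
rewrite /= mul0r addr0; lra.
Qed.

Lemma gram_comb (n : nat) (x : 'I_n -> vec) q (w : 'I_n -> R) :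
  (forall i j, dotv (x i) (x j) = q + (i == j)%:R * q) ->
  forall j, dotv (\sum_i w i *: x i) (x j) = q * (\sum_i w i) + q * w j.
Proof.
move=> H j; rewrite dotv_suml.
under eq_bigr do rewrite dotvZl H mulrDr.
rewrite big_split /=.
have -> : \sum_i w i * ((i == j)%:R * q) = w j * q.
  rewrite (bigD1 j) //= eqxx mul1r big1 ?addr0 // => i /negPf -> .
  by rewrite mul0r mulr0.
by rewrite -mulr_suml; lra.
Qed.

Lemma row_free_gram (n : nat) (M : 'M[R]_(n, m)) q : q != 0 ->
  (forall i j, dotv (row i M) (row j M) = q + (i == j)%:R * q) -> row_free M.
Proof.
move=> q0 H; apply: inj_row_free => v Hv.
have Hj : forall j, v 0 j = - \sum_i v 0 i.
  move=> j; have := gram_comb (fun i => v 0 i) H j.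
  rewrite -mulmx_sum_row Hv dotv0l -mulrDr => /esym/eqP.
  rewrite mulf_eq0 (negPf q0) /= addrC addr_eq0 => /eqP //.
have Hs : \sum_i v 0 i = 0.
  have : \sum_i v 0 i = - (n%:R * \sum_i v 0 i).
    rewrite {1}(eq_bigr _ (fun j _ => Hj j)) sumr_const card_ord.
    by rewrite mulNrn mulr_natl.
  move=> /eqP; rewrite -addr_eq0 -{1}(mul1r (\sum_i _)) -mulrDl => /eqP.
  move/eqP; rewrite mulf_eq0 => /orP[|/eqP //].
  by rewrite addrC natr1 pnatr_eq0.
by apply/rowP => j; rewrite Hj Hs oppr0 mxE.
Qed.

Lemma aff_indep_of_dists (n : nat) (B : 'I_n.+1 -> vec) u : u != 0 ->
  (forall i j, i != j -> edist (B i) (B j) = u) -> aff_indep B.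
Proof.
move=> u0 H; rewrite /aff_indep; apply: (row_free_gram (q := u ^+ 2 / 2)).
  by rewrite mulf_neq0 ?expf_neq0 // invr_eq0 pnatr_eq0.
by move=> i j; rewrite !rowK; apply: gram_of_dists.
Qed.


Lemma comb_sub (k : nat) (B : 'I_k -> vec) (w : 'I_k -> R) c0 :
  \sum_i w i = 1 -> \sum_i w i *: B i - c0 = \sum_i w i *: (B i - c0).
Proof.
move=> H; under [RHS]eq_bigr do rewrite scalerBr.
by rewrite sumrB -scaler_suml H scale1r.
Qed.

Lemma replace0_lift (n : nat) (A : 'I_n.+1 -> vec) Q i :
  replace0 A Q (lift ord0 i) = A (lift ord0 i).
Proof. by rewrite /replace0 eq_sym (negPf (neq_lift _ _)). Qed.

Lemma replace0_0 (n : nat) (A : 'I_n.+1 -> vec) Q : replace0 A Q ord0 = Q.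
Proof. by rewrite /replace0 eqxx. Qed.

Lemma replace0_dists (n : nat) (A : 'I_n.+1 -> vec) u Q :
  (forall i j, i != j -> edist (A i) (A j) = u) ->
  (forall i, edist Q (A (lift ord0 i)) = u) ->
  forall i j, i != j -> edist (replace0 A Q i) (replace0 A Q j) = u.
Proof.
move=> HA HQ i j.
case: (unliftP ord0 i) => [i' ->|->]; case: (unliftP ord0 j) => [j' ->|->];
  rewrite ?replace0_lift ?replace0_0 ?eqxx //.
- exact: HA.
- by move=> _; rewrite edistC.
Qed.

Lemma replace0_reg (n : nat) (A : 'I_n.+1 -> vec) u Q : u != 0 ->
  (forall i j, i != j -> edist (A i) (A j) = u) ->
  (forall i, edist Q (A (lift ord0 i)) = u) ->
  regular_simplex (replace0 A Q).
Proof.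
move=> u0 HA HQ; have Hd := replace0_dists HA HQ.
by exists u; split => //; apply: aff_indep_of_dists u0 Hd.
Qed.

Lemma edist_of_sq x y (a : R) : 0 <= a -> dotv (x - y) (x - y) = a ^+ 2 -> edist x y = a.
Proof. by move=> a0 H; rewrite /edist H sqrt_sq_ge0. Qed.

End Dot.

Unset Implicit Arguments.
Unset Strict Implicit.

Theorem theorem5p2 (R : realType) (n m : nat) (A : 'I_n.+1 -> 'rV[R]_m)
    (u r : R) (Q0 : 'rV[R]_m) :
  (2 <= n)%N -> (n.+1 <= m)%N ->
  regular_simplex_edge A u ->
  is_circumradius A r ->
  is_reflection_in_hull (facet0 A) (A ord0) Q0 ->
  (forall d : R,
     (exists Q, regular_simplex (replace0 A Q) /\ edist Q (A ord0) = d) <->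
     (0 <= d /\ d <= Num.sqrt (2 * n.+1%:R / n%:R) * u)) /\
  Num.sqrt (2 * n.+1%:R / n%:R) * u = 2 * n.+1%:R / n%:R * r /\
  regular_simplex (replace0 A (A ord0)) /\ edist (A ord0) (A ord0) = 0 /\
  regular_simplex (replace0 A Q0) /\
  edist Q0 (A ord0) = Num.sqrt (2 * n.+1%:R / n%:R) * u.
Proof.
move=> n2 nm [indA distA] Hcirc Hrefl.
have n0 : (0 < n)%N by apply: leq_trans n2.
have n1 : (1 < n)%N by [].
pose i0 : 'I_n := Ordinal n0.
pose i1 : 'I_n := Ordinal n1.
have i01 : i0 != i1 by [].
pose x i := A (lift ord0 i) - A ord0.
pose q := u ^+ 2 / 2.
have gramx : forall i j, dotv (x i) (x j) = q + (i == j)%:R * q.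
  exact: gram_of_dists distA.
have u_ge0 : 0 <= u by rewrite -(distA ord0 (lift ord0 i0) (neq_lift _ _)) edist_ge0.
have u0 : u != 0.
  apply/eqP => u0.
  have xi0 : x i0 = 0.
    apply: dotv_eq0; rewrite gramx /q u0 eqxx /=; ring.
  have := @row_free_inj _ 1%N _ _ _ indA ('e_i0) 0.
  rewrite -rowE rowK mul0mx -/(x i0) xi0 => /(_ erefl) /matrixP /(_ 0 i0).
  by rewrite !mxE !eqxx /= => /eqP; rewrite oner_eq0.
pose N : R := n%:R.
have N0 : N != 0 by rewrite pnatr_eq0 -lt0n.
have Ngt0 : 0 < N by rewrite ltr0n.
have q0 : q != 0 by rewrite mulf_neq0 ?expf_neq0 // invr_eq0 pnatr_eq0.
pose K := Num.sqrt (2 * n.+1%:R / N) * u.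
have K_ge0 : 0 <= K by rewrite mulr_ge0 ?sqrtr_ge0.
have KK : K ^+ 2 = 2 * (N + 1) / N * u ^+ 2.
  rewrite exprMn sqr_sqrtr ?natr1 // mulr_ge0 // ?mulr_ge0 //.
  by rewrite invr_ge0 ler0n.
pose s := \sum_i x i.
have dsx : forall j, dotv s (x j) = q * N + q.
  move=> j; have := gram_comb (fun _ => 1) gramx j.
  under eq_bigr do rewrite scale1r.
  by rewrite sumr_const card_ord mulr1 -[_ *+ _]mulr_natl mulr1.
have dss : dotv s s = N * (q * N + q).
  rewrite dotv_sumr; under eq_bigr do rewrite dsx.
  by rewrite sumr_const card_ord mulr_natl.
have Hxd : forall i, dotv (x i) (x i) = u ^+ 2.
  by move=> i; rewrite gramx eqxx /q /=; lra.
have rK : K = 2 * n.+1%:R / N * r.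
  case: Hcirc => c [[wc [swc ->]] hc].
  pose wl i := wc (lift ord0 i).
  pose W := \sum_i wl i.
  have hy : \sum_i wc i *: A i - A ord0 = \sum_i wl i *: x i.
    rewrite comb_sub // big_ord_recl subrr scaler0 add0r.
    by apply: eq_bigr.
  have r_ge0 : 0 <= r by rewrite -(hc ord0) edist_ge0.
  have hyy := edist_sq (hc ord0); rewrite hy in hyy.
  have hyx : forall i, dotv (\sum_i wl i *: x i) (x i) = q.
    move=> i; have := edist_sq (hc (lift ord0 i)).
    rewrite -(sub_sub_common _ _ (A ord0)) hy dotv_sqB hyy -/(x i) Hxd /q => h.
    lra.
  have hw : forall i, wl i = 1 - W.
    move=> i; have := gram_comb wl gramx i; rewrite hyx -mulrDr.
    move=> /eqP; rewrite -subr_eq0 -{1}(mulr1 q) -mulrBr mulf_eq0 (negPf q0) /=.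
    by rewrite subr_eq0 => /eqP h; rewrite /W; lra.
  have hW : W = N / (N + 1).
    have : W = N * (1 - W).
      by rewrite {1}/W (eq_bigr _ (fun i _ => hw i)) sumr_const card_ord mulr_natl.
    have N10 : N + 1 != 0 by rewrite gt_eqF // ltr_wpDl.
    move=> h; apply: (mulIf N10); rewrite divfK //; lra.
  have hr2 : r ^+ 2 = q * W.
    rewrite -hyy dotv_suml.
    under eq_bigr do rewrite dotvZl dotvC hyx.
    by rewrite -mulr_suml mulrC.
  rewrite -(sqrt_sq_ge0 K_ge0) -[RHS]sqrt_sq_ge0; last first.
    by rewrite mulr_ge0 // mulr_ge0 // ?invr_ge0 ?ler0n // mulr_ge0.
  congr Num.sqrt; rewrite KK exprMn hr2 hW /q -natr1 -/N.
  by field; rewrite -/N N0 andbT gt_eqF // ltr_wpDl.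
have HQ0 : (forall i, edist Q0 (A (lift ord0 i)) = u) /\ edist Q0 (A ord0) = K.
  case: Hrefl => P [[wp [swp hP]] [orth ->]].
  pose y := P - A ord0.
  have hy : y = \sum_i wp i *: x i by rewrite /y hP comb_sub.
  have hyc : forall i, dotv y (x i) = dotv y (x i0).
    move=> i; have := orth i i0.
    rewrite /facet0 -(sub_sub_common (A (lift ord0 i)) (A (lift ord0 i0)) (A ord0)).
    rewrite -(opprB P) dotvNl -/y dotvBr -/(x i) -/(x i0).
    by move=> /eqP; rewrite oppr_eq0 subr_eq0 => /eqP.
  pose k := dotv y (x i0).
  have hw : forall i, q * wp i = k - q.
    move=> i; have := gram_comb wp gramx i; rewrite -hy hyc swp -/k; lra.
  have hk : k = q + q / N.
    have : q = N * (k - q).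
      rewrite -{1}(mulr1 q) -swp mulr_sumr (eq_bigr _ (fun i _ => hw i)).
      by rewrite sumr_const card_ord mulr_natl.
    move=> h; have : q / N = k - q by rewrite {1}h mulrC mulKf.
    lra.
  have hyy : dotv y y = k.
    rewrite {1}hy dotv_suml; under eq_bigr do rewrite dotvZl dotvC hyc -/k.
    by rewrite -mulr_suml swp mul1r.
  have hQ : 2%:R *: P - A ord0 - A ord0 = 2%:R *: y.
    by rewrite /y scalerBr -addrA -opprD [2%:R *: A ord0]scaler_nat mulr2n.
  split.
    move=> i; apply: edist_of_sq => //.
    rewrite -(sub_sub_common _ _ (A ord0)) hQ dotv_sqB -/(x i) Hxd dotvZl !dotvZr.
    rewrite dotvZl hyy hyc -/k; lra.
  apply: edist_of_sq => //; rewrite hQ dotvZl dotvZr hyy KK hk /q.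
  by field.
have N10 : N + 1 != 0 by rewrite gt_eqF // ltr_wpDl.
split; last first.
  split; first exact: rK.
  split.
    apply: (replace0_reg u0 distA) => i.
    exact: (distA ord0 (lift ord0 i) (neq_lift _ _)).
  split; first by rewrite /edist subrr dotv0l sqrtr0.
  split; last exact: HQ0.2.
  exact: (replace0_reg u0 distA HQ0.1).
move=> d; split.
  move=> [Q [[u' [_ dQ]] <-]]; split; first exact: edist_ge0.
  have uu : u' = u.
    rewrite -(dQ (lift ord0 i0) (lift ord0 i1)).
      by rewrite !replace0_lift; apply: distA; rewrite (inj_eq (@lift_inj _ ord0)).
    by rewrite (inj_eq (@lift_inj _ ord0)).
  have hQi : forall i, edist Q (A (lift ord0 i)) = u.
    by move=> i; have := dQ ord0 (lift ord0 i) (neq_lift _ _); rewrite replace0_0 replace0_lift uu.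
  pose z := Q - A ord0.
  have hzx : forall i, dotv z (x i) = dotv z z / 2.
    move=> i; have := edist_sq (hQi i).
    rewrite -(sub_sub_common Q (A (lift ord0 i)) (A ord0)) dotv_sqB -/z -/(x i) Hxd.
    lra.
  have hzs : dotv z s = N * (dotv z z / 2).
    rewrite dotv_sumr; under eq_bigr do rewrite hzx.
    by rewrite sumr_const card_ord mulr_natl.
  have h0 := dotv_ge0 (z - (2 / N) *: s).
  rewrite dotv_sqB dotvZr dotvZl dotvZr hzs dss in h0.
  have hD : dotv z z <= K ^+ 2.
    move: h0; set zz := dotv z z; rewrite KK /q.
    have -> : zz - 2 * (2 / N * (N * (zz / 2))) + 2 / N * (2 / N * (N * (u ^+ 2 / 2 * N + u ^+ 2 / 2)))
      = 2 * (N + 1) / N * u ^+ 2 - zz by field.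
    lra.
  by have := ler_wsqrtr hD; rewrite sqrt_sq_ge0.
move=> [d0 dK].
pose X := \matrix_(i < n, k < m) x i 0 k.
pose Ker := kermx X^T.
have rk : (0 < \rank Ker)%N.
  by rewrite mxrank_ker subn_gt0; exact: leq_ltn_trans (rank_leq_col _) nm.
have [k hk] : exists k, row k Ker != 0.
  case: (pickP (fun k => row k Ker != 0)) => [k hk|none]; first by exists k.
  have K0 : Ker = 0.
    by apply/row_matrixP => k; rewrite row0; apply/eqP; have := none k; move/negbFE.
  by move: rk; rewrite K0 mxrank0.
pose e := row k Ker.
have ex : forall j, dotv e (x j) = 0.
  move=> j; have h : e *m X^T = 0 by rewrite -row_mul mulmx_ker row0.
  transitivity ((e *m X^T) 0 j); last by rewrite h mxE.
  by rewrite mxE; apply: eq_bigr => l _; rewrite !mxE.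
have es : dotv s e = 0.
  by rewrite dotv_suml big1 // => i _; rewrite dotvC ex.
have E0 : 0 < dotv e e.
  rewrite lt_def dotv_ge0 andbT; apply/eqP => /dotv_eq0; exact/eqP.
have Ene : dotv e e != 0 by rewrite gt_eqF.
pose D := d ^+ 2.
pose b := D / ((N + 1) * u ^+ 2).
pose T := D - b ^+ 2 * (N * (q * N + q)).
have T0 : 0 <= T.
  have DK : D <= K ^+ 2 by rewrite /D !expr2; apply: ler_pM.
  have -> : T = D * (K ^+ 2 - D) * (N / (2 * (N + 1) * u ^+ 2)).
    by rewrite KK /T /b /q; field; rewrite N10 N0 u0.
  rewrite mulr_ge0 // ?mulr_ge0 ?sqr_ge0 ?subr_ge0 // ?ltW //.
  by rewrite invr_gt0 !mulr_gt0 // ?ltr_wpDl // lt_def u0 u_ge0.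
pose mu := Num.sqrt (T / dotv e e).
have mu2 : mu * (mu * dotv e e) = T.
  by rewrite mulrA -expr2 sqr_sqrtr ?divfK // divr_ge0 // ltW.
pose Q := A ord0 + (b *: s + mu *: e).
have hQA : Q - A ord0 = b *: s + mu *: e by rewrite /Q addrC addKr.
have hvv : dotv (b *: s + mu *: e) (b *: s + mu *: e) = D.
  rewrite dotv_sqD !dotvZl !dotvZr es dss mu2 /T; ring.
have hvx : forall i, dotv (b *: s + mu *: e) (x i) = b * (q * N + q).
  by move=> i; rewrite dotvDl !dotvZl dsx ex mulr0 addr0.
exists Q; split.
  apply: (replace0_reg u0 distA) => i; apply: edist_of_sq => //.
  rewrite -(sub_sub_common Q (A (lift ord0 i)) (A ord0)) hQA -/(x i) dotv_sqB hvv hvx Hxd.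
  by rewrite /b /q; field; rewrite N10 u0.
by apply: edist_of_sq d0 _; rewrite hQA hvv.
Qed.
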